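(* Let $p$ be a prime, $R=\mathbb{F}_p[x,x^{-1}]$, $n\ge1$, let $U$ be an additive subgroup of $R^n$, and let $(f_m)_{m\ge1}$ be an enumeration of the irreducible elements of $\mathbb{F}_p[x]$. Then $U_m=f_mU\to\{0\}$.
   Context: Convergence of subsets $U_m\to\{0\}$ of $R^n$ means that for every $v\in R^n$, the truth value of $v\in U_m$ is eventually equal to that of $v\in\{0\}$ (the topology induced from $\{0,1\}^{R^n}$). *)

(* Defs.v *)
From mathcomp Require Import all_boot all_order all_algebra.
From mathcomp Require Import fraction.
Set Implicit Arguments. Unset Strict Implicit. Unset Printing Implicit Defensive.
Import Order.TTheory GRing.Theory Num.Theory.
Local Open Scope ring_scope.

Notation "x %:F" := (@FracField.tofrac _ x) : ring_scope.

(* The fraction field F_p(x) of F_p[x]; the Laurent polynomial ring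
   R = F_p[x, x^{-1}] is realised as the subring of elements q / x^k. *)

Definition FpX (p : nat) := {fraction {poly 'F_p}}.

Definition laurent (p : nat) (r : FpX p) : Prop :=
  exists (q : {poly 'F_p}) (k : nat), r = q%:F / ('X^k)%:F.

Definition laurent_vec (p n : nat) (v : 'rV[FpX p]_n) : Prop :=
  forall i, laurent (v 0 i).

Definition additive_subgroup (p n : nat) (U : 'rV[FpX p]_n -> Prop) : Prop :=
  [/\ forall u, U u -> laurent_vec u,
      U 0 &
      forall u w, U u -> U w -> U (u - w)].

Definition scale_set (p n : nat) (f : {poly 'F_p}) (U : 'rV[FpX p]_n -> Prop)
  : 'rV[FpX p]_n -> Prop :=
  fun v => exists u, U u /\ v = f%:F *: u.

Definition irreducible_enum (p : nat) (f : nat -> {poly 'F_p}) : Prop :=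
  [/\ forall m, (1 <= m)%N -> irreducible_poly (f m),
      forall m m', (1 <= m)%N -> (1 <= m')%N -> f m = f m' -> m = m' &
      forall q, irreducible_poly q -> exists2 m, (1 <= m)%N & f m = q].

(* Convergence of subsets of R^n in {0,1}^(R^n): for every v in R^n,
   the truth value of v \in U_m is eventually that of v \in L. *)
Definition subsets_converge (p n : nat) (Um : nat -> 'rV[FpX p]_n -> Prop)
  (L : 'rV[FpX p]_n -> Prop) : Prop :=
  forall v, laurent_vec v ->
    exists N, forall m, (N <= m)%N -> (Um m v <-> L v).

(* Main.v *)
Require Import Defs.
From mathcomp Require Import all_boot all_order all_algebra.
From mathcomp Require Import fraction.
From Stdlib Require Import Classical.
Import GRing.Theory.
Set Implicit Arguments. Unset Strict Implicit.
Local Open Scope ring_scope.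

Lemma irr_notcop_size (F : fieldType) (f g : {poly F}) :
  irreducible_poly f -> g != 0 -> ~~ coprimep f g -> (size f <= size g)%N.
Proof.
move=> [_ hirr] gn0 ncop.
have hd : gcdp f g %= f.
  apply: hirr; first by rewrite -coprimep_def.
  exact: dvdp_gcdl.
rewrite -(eqp_size hd); apply: dvdp_leq => //; exact: dvdp_gcdr.
Qed.

Lemma irr_dvd_bound (F : fieldType) (f q : {poly F}) (j : nat) :
  irreducible_poly f -> q != 0 -> f %| q * 'X^j ->
  (size f <= maxn (size q) 2)%N.
Proof.
move=> hf qn0 hdv.
have [cq|ncq] := boolP (coprimep f q); last first.
  have h := irr_notcop_size hf qn0 ncq.
  by rewrite leq_max h.
have [cx|ncx] := boolP (coprimep f 'X); last first.
  have := irr_notcop_size hf (negbT (polyX_eq0 _)) ncx; rewrite size_polyX => h.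
  by rewrite leq_max h orbT.
have cop : coprimep f (q * 'X^j) by rewrite coprimepMr cq coprimep_expr.
move: cop; rewrite coprimep_def.
have -> : size (gcdp f (q * 'X^j)) = size f by apply: eqp_size; exact: dvdp_gcd_idl.
by case: hf => h1 _ /eqP h; rewrite h in h1.
Qed.

Lemma avoid_list (T : eqType) (f : nat -> T) (s : seq T) :
  (forall m m', (1 <= m)%N -> (1 <= m')%N -> f m = f m' -> m = m') ->
  exists N, forall m, (N <= m)%N -> f m \notin s.
Proof.
move=> inj; elim: s => [|a s [N HN]]; first by exists 0%N.
have [[m0 [hm0 e]]|ne] := classic (exists m0, (1 <= m0)%N /\ f m0 = a).
  exists (maxn N (maxn m0.+1 1)) => m hm; rewrite in_cons negb_or HN.
    rewrite andbT; apply/eqP => em; have := inj _ _ _ hm0 (etrans em (esym e)).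
    have : (m0 < m)%N by apply: leq_trans hm; rewrite leq_max leq_max leqnn orbT.
    move=> lt; have h1 : (1 <= m)%N by apply: leq_trans lt.
    by move=> /(_ h1) eq; rewrite eq ltnn in lt.
  by apply: leq_trans hm; exact: leq_maxl.
exists (maxn N 1) => m hm; rewrite in_cons negb_or HN ?andbT.
  apply/eqP => em; apply: ne; exists m; split => //.
  by apply: leq_trans hm; exact: leq_maxr.
by apply: leq_trans hm; exact: leq_maxl.
Qed.

Lemma bounded_finite (P : nat) (B : nat) (f : nat -> {poly 'F_P}) :
  (forall m m', (1 <= m)%N -> (1 <= m')%N -> f m = f m' -> m = m') ->
  exists N, forall m, (N <= m)%N -> (B < size (f m))%N.
Proof.
move=> inj.
have [N HN] := avoid_list [seq Poly (val t) | t : B.-tuple 'F_P] inj.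
exists N => m hm; rewrite ltnNge; apply/negP => hs.
move: (HN m hm) => /negP; apply.
apply/mapP.
exists (@Tuple B _ (mkseq (fun i => (f m)`_i) B) (introT eqP (size_mkseq _ _))).
  by rewrite mem_enum.
apply/polyP => i; rewrite coef_Poly /=.
case: (ltnP i B) => hi; first by rewrite nth_mkseq.
by rewrite !nth_default // ?size_mkseq // (leq_trans hs).
Qed.

Lemma frac_eq (K : fieldType) (a b c d e : K) :
  b != 0 -> e != 0 -> a / b = c * (d / e) -> a * e = c * (d * b).
Proof.
move=> hb he E.
have E' : a = c * (d / e) * b by rewrite -E divfK.
by rewrite E' -!mulrA [e^-1 * _]mulrC mulfK.
Qed.

Theorem lemma6p16 (p : nat) (hp : prime p) (n : nat) (hn : (1 <= n)%N)
  (U : 'rV[FpX p]_n -> Prop) (hU : additive_subgroup U)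
  (f : nat -> {poly 'F_p}) (hf : irreducible_enum f) :
  subsets_converge (fun m => scale_set (f m) U) (fun v => v = 0).
Proof.
case: hU => hUl hU0 _; case: hf => hirr hinj _.
move=> v hv.
have [->|vn0] := eqVneq v 0.
  exists 0%N => m _; split => // _; exists 0; split => //; by rewrite scaler0.
have [i vi] : exists i, v 0 i != 0.
  apply: NNPP => hc; move/eqP: vn0; apply; apply/rowP => j; rewrite [RHS]mxE.
  apply: NNPP => hj; apply: hc; exists j; exact/eqP.
have [q [k eq]] := hv i.
have qn0 : q != 0 by apply: contraNneq vi => q0; rewrite eq q0 tofrac0 mul0r.
have [N HN] := bounded_finite (maxn (size q) 2) hinj.
exists (maxn N 1) => m hm; split; last by move=> v0; rewrite v0 eqxx in vn0.
move=> [u [hu ev]]; exfalso.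
have hm1 : (1 <= m)%N by apply: leq_trans hm; exact: leq_maxr.
have := HN m (leq_trans (leq_maxl _ _) hm); rewrite ltnNge => /negP; apply.
have [r [j eu]] := hUl u hu i.
have E : v 0 i = (f m)%:F * u 0 i by rewrite ev mxE.
rewrite eq eu in E.
have Xn0 : forall l : nat, ('X^l : {poly 'F_p})%:F != 0.
  by move=> l; rewrite tofrac_eq0 expf_neq0 // polyX_eq0.
have E2 : q * 'X^j = f m * (r * 'X^k).
  apply/eqP; rewrite -tofrac_eq !tofracM; apply/eqP.
  exact: frac_eq (Xn0 k) (Xn0 j) E.
apply: irr_dvd_bound (hirr m hm1) qn0 _.
move: (dvdp_mulr (r * 'X^k) (dvdpp (f m))); rewrite -E2 => H.
exact H.
Qed.
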